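(* Suppose that $A$ and $B$ are Gram mates and $\mathrm{rank}(A-B)=1$. If the remaining matrix of $A$ and $B$ is fixable, then $A$ is isomorphic to $B$.
   Context: Two $(0,1)$ matrices $A\neq B$ are Gram mates if $AA^T=BB^T$ and $A^TA=B^TB$; they are isomorphic if $B=PAQ$ for permutation matrices $P,Q$. If $A,B$ are Gram mates with $\mathrm{rank}(A-B)=1$, then after permuting rows and columns one may write $A=\begin{bmatrix} 0 & J_{k_1,k_2} & X_1\\ J_{k_1,k_2} & 0 & X_2\\ X_3 & X_4 & Y\end{bmatrix}$, $B=\begin{bmatrix} J_{k_1,k_2} & 0 & X_1\\ 0 & J_{k_1,k_2} & X_2\\ X_3 & X_4 & Y\end{bmatrix}$ with $k_1,k_2>0$, $\mathbf{1}^TX_1=\mathbf{1}^TX_2$, $X_3\mathbf{1}=X_4\mathbf{1}$, where $J_{p,q}$ is the $p\times q$ all-ones matrix; $Y$ (the submatrix on rows and columns where $A-B$ is zero) is the remaining matrix of $A$ and $B$. For $(0,1)$ matrices $Z_1,Z_2$ of equal size, $\mathcal R_{Z_1,Z_2}$ is the set of triples $(P_1,P_2,Q)$ of permutation matrices with $Z_2=P_1Z_1Q$ and $Z_1=P_2Z_2Q$, and $\mathcal L_{Z_1,Z_2}$ is the set of triples $(P,Q_1,Q_2)$ of permutation matrices with $Z_1=PZ_1Q_1$ and $Z_2=PZ_2Q_2$. $Y$ is fixable if there exist permutation matrices $P,Q$ with $Y=PYQ$ such that either (i) $(P_1,P_2,Q)\in\mathcal R_{X_1,X_2}$ and $(P,Q_3,Q_4)\in\mathcal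 L_{X_3,X_4}$ for some $P_1,P_2,Q_3,Q_4$, or (ii) $(Q_3,Q_4,P^T)\in\mathcal R_{X_3^T,X_4^T}$ and $(Q^T,P_1,P_2)\in\mathcal L_{X_1^T,X_2^T}$ for some $P_1,P_2,Q_3,Q_4$. *)

(* Defs.v *)
From HB Require Import structures.
From mathcomp Require Import all_boot all_order all_algebra.
Set Implicit Arguments. Unset Strict Implicit. Unset Printing Implicit Defensive.
Import GRing.Theory Num.Theory.
Local Open Scope ring_scope.

(* Matrices are taken over the rationals; (0,1) matrices are those with all
   entries in {0,1}.  Rank is the rank over Q (= rank over R). *)

Definition zero_one m n (A : 'M[rat]_(m, n)) : Prop :=
  forall i j, A i j = 0 \/ A i j = 1.

Definition gram_mates m n (A B : 'M[rat]_(m, n)) : Prop :=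
  [/\ zero_one A, zero_one B, A <> B,
      A *m A^T = B *m B^T & A^T *m A = B^T *m B].

Definition mx_isomorphic m n (A B : 'M[rat]_(m, n)) : Prop :=
  exists (P : 'M[rat]_m) (Q : 'M[rat]_n),
    [/\ is_perm_mx P, is_perm_mx Q & B = P *m A *m Q].

Definition R_set a b (Z1 Z2 : 'M[rat]_(a, b))
  (P1 P2 : 'M[rat]_a) (Q : 'M[rat]_b) : Prop :=
  [/\ is_perm_mx P1, is_perm_mx P2, is_perm_mx Q,
      Z2 = P1 *m Z1 *m Q & Z1 = P2 *m Z2 *m Q].

Definition L_set a b (Z1 Z2 : 'M[rat]_(a, b))
  (P : 'M[rat]_a) (Q1 Q2 : 'M[rat]_b) : Prop :=
  [/\ is_perm_mx P, is_perm_mx Q1, is_perm_mx Q2,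
      Z1 = P *m Z1 *m Q1 & Z2 = P *m Z2 *m Q2].

Definition fixable k1 k2 p q
  (X1 X2 : 'M[rat]_(k1, q)) (X3 X4 : 'M[rat]_(p, k2)) (Y : 'M[rat]_(p, q))
  : Prop :=
  exists (P : 'M[rat]_p) (Q : 'M[rat]_q),
    [/\ is_perm_mx P, is_perm_mx Q, Y = P *m Y *m Q &
      ((exists (P1 P2 : 'M[rat]_k1) (Q3 Q4 : 'M[rat]_k2),
          R_set X1 X2 P1 P2 Q /\ L_set X3 X4 P Q3 Q4)
   \/ (exists (P1 P2 : 'M[rat]_k1) (Q3 Q4 : 'M[rat]_k2),
          R_set X3^T X4^T Q3 Q4 P^T /\ L_set X1^T X2^T Q^T P1 P2))].

(* The block normal form of Gram mates A, B with rank(A - B) = 1. *)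
Definition rank1_normal_form k1 k2 p q
  (A B : 'M[rat]_(k1 + k1 + p, k2 + k2 + q))
  (X1 X2 : 'M[rat]_(k1, q)) (X3 X4 : 'M[rat]_(p, k2)) (Y : 'M[rat]_(p, q))
  : Prop :=
  let J : 'M[rat]_(k1, k2) := const_mx 1 in
  [/\ (0 < k1)%N /\ (0 < k2)%N,
      A = block_mx (block_mx 0 J J 0) (col_mx X1 X2) (row_mx X3 X4) Y,
      B = block_mx (block_mx J 0 0 J) (col_mx X1 X2) (row_mx X3 X4) Y,
      (const_mx 1 : 'M[rat]_(1, k1)) *m X1 = (const_mx 1 : 'M[rat]_(1, k1)) *m X2
    & X3 *m (const_mx 1 : 'M[rat]_(k2, 1)) = X4 *m (const_mx 1 : 'M[rat]_(k2, 1))].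

(* "The remaining matrix of A and B is fixable": after permuting rows and
   columns (simultaneously for A and B), A and B are in the normal form with
   blocks X1..X4 and remaining matrix Y, and Y is fixable. *)
Definition remaining_fixable m n (A B : 'M[rat]_(m, n)) : Prop :=
  exists (k1 k2 p q : nat) (em : m = (k1 + k1 + p)%N) (en : n = (k2 + k2 + q)%N)
         (P : 'M[rat]_m) (Q : 'M[rat]_n)
         (X1 X2 : 'M[rat]_(k1, q)) (X3 X4 : 'M[rat]_(p, k2)) (Y : 'M[rat]_(p, q)),
    [/\ is_perm_mx P, is_perm_mx Q,
        rank1_normal_form (castmx (em, en) (P *m A *m Q))
                          (castmx (em, en) (P *m B *m Q)) X1 X2 X3 X4 Y
      & fixable X1 X2 X3 X4 Y].

(* Main.v *)
Require Import Defs.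
From mathcomp Require Import all_boot all_order all_algebra all_fingroup.
Set Implicit Arguments. Unset Strict Implicit. Unset Printing Implicit Defensive.
Import GRing.Theory.
Local Open Scope ring_scope.

Lemma perm_of_sum a b (g : 'I_a + 'I_b -> 'I_a + 'I_b) : injective g ->
  exists s : 'S_(a + b), forall u, s (unsplit u) = unsplit (g u).
Proof.
move=> ig.
have fi : injective (fun i : 'I_(a + b) => unsplit (g (split i))).
  move=> x y /(can_inj unsplitK) /ig /(can_inj splitK) //.
exists (perm fi) => u; by rewrite permE unsplitK.
Qed.

Lemma perm_mx_entry n (s : 'S_n) i j : perm_mx s i j = (s i == j)%:R :> rat.
Proof. by rewrite perm_mxEsub !mxE. Qed.

Lemma is_perm_diag a b (P1 : 'M[rat]_a) (P2 : 'M[rat]_b) :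
  is_perm_mx P1 -> is_perm_mx P2 -> is_perm_mx (block_mx P1 0 0 P2).
Proof.
case/is_perm_mxP => s1 ->; case/is_perm_mxP => s2 ->.
pose g (u : 'I_a + 'I_b) := match u with inl i => inl (s1 i) | inr j => inr (s2 j) end.
have ig : injective g.
  by case=> x [] y //= [] /perm_inj ->.
have [s Hs] := perm_of_sum ig.
apply/is_perm_mxP; exists s; apply/matrixP => i j.
rewrite -(splitK i) -(splitK j) perm_mx_entry Hs.
case: (split i) => x; case: (split j) => y /=;
  rewrite ?block_mxEul ?block_mxEur ?block_mxEdl ?block_mxEdr ?mxE ?perm_mx_entry
     ?eq_lshift ?eq_rshift ?eq_lrshift ?eq_rlshift //.
Qed.

Lemma is_perm_anti k (P1 P2 : 'M[rat]_k) :
  is_perm_mx P1 -> is_perm_mx P2 -> is_perm_mx (block_mx 0 P2 P1 0).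
Proof.
case/is_perm_mxP => s1 ->; case/is_perm_mxP => s2 ->.
pose g (u : 'I_k + 'I_k) := match u with inl i => inr (s2 i) | inr j => inl (s1 j) end.
have ig : injective g.
  by case=> x [] y //= [] /perm_inj ->.
have [s Hs] := perm_of_sum ig.
apply/is_perm_mxP; exists s; apply/matrixP => i j.
rewrite -(splitK i) -(splitK j) perm_mx_entry Hs.
case: (split i) => x; case: (split j) => y /=;
  rewrite ?block_mxEul ?block_mxEur ?block_mxEdl ?block_mxEdr ?mxE ?perm_mx_entry
     ?eq_lshift ?eq_rshift ?eq_lrshift ?eq_rlshift //.
Qed.

Lemma perm_trK n (P : 'M[rat]_n) : is_perm_mx P -> P^T *m P = 1%:M /\ P *m P^T = 1%:M.
Proof.
case/is_perm_mxP => s ->; rewrite tr_perm_mx -!perm_mxM mulVg mulgV perm_mx1 //.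
Qed.

Lemma permJl n k (P : 'M[rat]_n) : is_perm_mx P -> P *m (const_mx 1 : 'M_(n, k)) = const_mx 1.
Proof.
case/is_perm_mxP => s ->; rewrite -row_permE; apply/matrixP => i j; by rewrite !mxE.
Qed.

Lemma permJr n k (P : 'M[rat]_n) : is_perm_mx P -> (const_mx 1 : 'M_(k, n)) *m P = const_mx 1.
Proof.
case/is_perm_mxP => s ->; rewrite -(invgK s) -col_permE; apply/matrixP => i j; by rewrite !mxE.
Qed.
Lemma key k1 k2 p q (A B : 'M[rat]_(k1 + k1 + p, k2 + k2 + q))
  (X1 X2 : 'M[rat]_(k1, q)) (X3 X4 : 'M[rat]_(p, k2)) (Y : 'M[rat]_(p, q)) :
  rank1_normal_form A B X1 X2 X3 X4 Y -> fixable X1 X2 X3 X4 Y ->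
  exists R S, [/\ is_perm_mx R, is_perm_mx S & B = R *m A *m S].
Proof.
case=> _ -> -> _ _ [P [Q [pP pQ eY [[P1 [P2 [Q3 [Q4 [[p1 p2 _ e2 e1] [_ q3 q4 e3 e4]]]]]]|
   [P1 [P2 [Q3 [Q4 [[q3 q4 _ e4 e3] [_ p1 p2 e1 e2]]]]]]]]]].
- exists (block_mx (block_mx 0 P2 P1 0) 0 0 P), (block_mx (block_mx Q3 0 0 Q4) 0 0 Q).
  split; [by apply: is_perm_diag => //; apply: is_perm_anti|
          by apply: is_perm_diag => //; apply: is_perm_diag|].
  rewrite !mulmx_block !mul0mx !mulmx0 !addr0 !add0r mul_block_col !mul_mx_row mul_row_block ?mulmx_block.
  rewrite !mul0mx !mulmx0 !addr0 !add0r ?mul_col_mx ?mul_mx_row !permJl ?permJr //.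
  rewrite -eY -e3 -e4 !add_row_mx !mul_row_col !mul0mx !addr0 !add0r -?e1 -?e2.
  by rewrite /block_mx.
- exists (block_mx (block_mx P1^T 0 0 P2^T) 0 0 P), (block_mx (block_mx 0 Q3^T Q4^T 0) 0 0 Q).
  split; [by apply: is_perm_diag => //; apply: is_perm_diag; rewrite is_perm_mx_tr|
          by apply: is_perm_diag => //; apply: is_perm_anti; rewrite is_perm_mx_tr|].
  have f3 : X3 = P *m X4 *m Q4^T by apply: trmx_inj; rewrite !trmx_mul !trmxK mulmxA.
  have f4 : X4 = P *m X3 *m Q3^T by apply: trmx_inj; rewrite !trmx_mul !trmxK mulmxA.
  have f1 : X1 = P1^T *m X1 *m Q by apply: trmx_inj; rewrite !trmx_mul !trmxK mulmxA.
  have f2 : X2 = P2^T *m X2 *m Q by apply: trmx_inj; rewrite !trmx_mul !trmxK mulmxA.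
  rewrite !mulmx_block !mul0mx !mulmx0 !addr0 !add0r mul_block_col !mul_mx_row mul_row_block ?mulmx_block.
  rewrite !mul0mx !mulmx0 !addr0 !add0r ?mul_col_mx ?mul_mx_row !permJl ?permJr ?is_perm_mx_tr //.

  rewrite -eY -f3 -f4 !add_row_mx !mul_row_col !mul0mx !addr0 !add0r -?f1 -?f2.
  by rewrite /block_mx.
Qed.
Theorem proposition6p1 (m n : nat) (A B : 'M[rat]_(m, n)) :
  gram_mates A B -> \rank (A - B) = 1%N -> remaining_fixable A B ->
  mx_isomorphic A B.
Proof.
move=> _ _ [k1 [k2 [p [q [em [en [P [Q [X1 [X2 [X3 [X4 [Y [pP pQ hn hf]]]]]]]]]]]]]].
subst m n; rewrite !castmx_id in hn.
have [R [S [pR pS eRS]]] := key hn hf.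
have [tP1 tP2] := perm_trK pP; have [tQ1 tQ2] := perm_trK pQ.
exists (P^T *m R *m P), (Q *m S *m Q^T); split.
- by rewrite !is_perm_mxMl // is_perm_mx_tr.
- by rewrite !is_perm_mxMl // is_perm_mx_tr.
have -> : B = P^T *m (P *m B *m Q) *m Q^T.
  by rewrite !mulmxA tP1 mul1mx -mulmxA tQ2 mulmx1.
by rewrite eRS !mulmxA.
Qed.
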